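(* Let $\mathbb{P}$ be any of the fifteen preferential conditional logics $\mathbb{PCL}$, $\mathbb{PN}$, $\mathbb{PT}$, $\mathbb{PW}$, $\mathbb{PC}$, $\mathbb{PU}$, $\mathbb{PNU}$, $\mathbb{PTU}$, $\mathbb{PWU}$, $\mathbb{PCU}$, $\mathbb{PA}$, $\mathbb{PNA}$, $\mathbb{PTA}$, $\mathbb{PWA}$, $\mathbb{PCA}$, with axiom system as described in the context, and let $\mathcal{P}$ be the corresponding class of neighbourhood models. For every formula $F$, if $F$ is derivable in the axiom system of $\mathbb{P}$, then $F$ is valid in every model of $\mathcal{P}$.
   Context: Formulas: $\mathcal{L} ::= p \mid \bot \mid A\wedge B \mid A\lor B \mid A\rightarrow B \mid A>B$ with $p$ propositional variables; $\neg A := A\to\bot$, $\top:=\neg\bot$. Axiom systems (over classical propositional logic with modus ponens): $\mathbb{PCL}$ = (RCEA) from $A\leftrightarrow B$ infer $(A>C)\leftrightarrow(B>C)$; (RCK) from $A\rightarrow B$ infer $(C>A)\rightarrow(C>B)$; (ID) $A>A$; (R-And) $(A>B)\wedge(A>C)\rightarrow(A>(B\wedge C))$; (CM) $(A>B)\wedge(A>C)\rightarrow((A\wedge B)>C)$; (OR) $(A>C)\wedge(B>C)\rightarrow((A\lor B)>C)$. Further axioms: (N) $\neg(\top>\bot)$; (T) $A\rightarrow\neg(A>\bot)$; (W) $(A>B)\rightarrow(A\rightarrow B)$; (C) $(A\wedge B)\rightarrow(A>B)$; (U$_1$) $(\neg A>\bot)\rightarrow(\neg(\neg A>\bot)>\bot)$;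 (U$_2$) $\neg(A>\bot)\rightarrow((A>\bot)>\bot)$; (A$_1$) $(A>B)\rightarrow(C>(A>B))$; (A$_2$) $\neg(A>B)\rightarrow(C>\neg(A>B))$. $\mathbb{PN}=\mathbb{PCL}+$(N), $\mathbb{PT}=\mathbb{PN}+$(T), $\mathbb{PW}=\mathbb{PT}+$(W), $\mathbb{PC}=\mathbb{PW}+$(C); $\mathbb{PU}=\mathbb{PCL}+$(U$_1$)+(U$_2$), and $\mathbb{PNU},\mathbb{PTU},\mathbb{PWU},\mathbb{PCU}$ add to $\mathbb{PU}$ respectively (N); (N),(T); (N),(T),(W); (N),(T),(W),(C); $\mathbb{PA}=\mathbb{PCL}+$(A$_1$)+(A$_2$), and $\mathbb{PNA},\dots,\mathbb{PCA}$ analogously. A neighbourhood model is $\langle W,N,\llbracket\cdot\rrbracket\rangle$ with $W\neq\emptyset$, $N:W\to\mathcal{P}(\mathcal{P}(W))$ such that every $\alpha\in N(x)$ is non-empty, and $\llbracket\cdot\rrbracket$ assigns to each atom a subset of $W$. Forcing: $x\Vdash p$ iff $x\in\llbracket p\rrbracket$, Boolean connectives classical, and $x\Vdash A>B$ iff for all $\alpha\in N(x)$, if some $y\in\alpha$ has $y\Vdash A$, then there is $\beta\in N(x)$ with $\beta\subseteq\alpha$, some $y\in\beta$ with $y\Vdash A$, and every $y\in\beta$ satisfies $y\Vdash A\to B$. A formula is valid in a model if forced at every world. Model conditions: normality: $N(x)\neq\emptyset$ for all $x$; total reflexivity: for all $x$ there is $\alpha\in N(x)$ with $x\in\alpha$;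 weak centering: $x\in\alpha$ for all $\alpha\in N(x)$; centering: weak centering and $\{x\}\in N(x)$ for all $x$; uniformity: if $\alpha\in N(x)$ and $y\in\alpha$ then $\bigcup N(x)=\bigcup N(y)$; absoluteness: if $\alpha\in N(x)$ and $y\in\alpha$ then $N(x)=N(y)$. The class corresponding to a logic is the class of neighbourhood models satisfying the conditions named by its letters (N normality, T total reflexivity, W weak centering, C centering, U uniformity, A absoluteness; $\mathbb{PCL}$: all neighbourhood models). *)

(* Defs.v *)
From Stdlib Require Import Bool.

Inductive form : Type :=
| Var : nat -> form
| Bot : form
| And : form -> form -> form
| Or  : form -> form -> form
| Imp : form -> form -> form
| Cond : form -> form -> form.

Definition Neg (A : form) : form := Imp A Bot.
Definition Top : form := Neg Bot.
Definition Iff (A B : form) : form := And (Imp A B) (Imp B A).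

(* A boolean valuation treats atoms and conditionals A>B as propositional
   letters and interprets the Boolean connectives classically. *)
Definition bool_valuation (v : form -> bool) : Prop :=
  v Bot = false /\
  (forall A B, v (And A B) = v A && v B) /\
  (forall A B, v (Or A B) = v A || v B) /\
  (forall A B, v (Imp A B) = implb (v A) (v B)).

(* Substitution instances of classical tautologies. *)
Definition tautology (F : form) : Prop :=
  forall v, bool_valuation v -> v F = true.

(* base: PCL, PCL + (U1)+(U2), PCL + (A1)+(A2) *)
Inductive base : Type := BP | BU | BA.
(* extension: none, N, N+T, N+T+W, N+T+W+C *)
Inductive ext : Type := Enone | EN | ET | EW | EC.

Definition hasN (e : ext) : Prop := e <> Enone.
Definition hasT (e : ext) : Prop := e = ET \/ e = EW \/ e = EC.
Definition hasW (e : ext) : Prop := e = EW \/ e = EC.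
Definition hasC (e : ext) : Prop := e = EC.

Inductive derivable (b : base) (e : ext) : form -> Prop :=
| d_taut : forall F, tautology F -> derivable b e F
| d_mp : forall A B, derivable b e (Imp A B) -> derivable b e A -> derivable b e B
| d_RCEA : forall A B C, derivable b e (Iff A B) ->
    derivable b e (Iff (Cond A C) (Cond B C))
| d_RCK : forall A B C, derivable b e (Imp A B) ->
    derivable b e (Imp (Cond C A) (Cond C B))
| d_ID : forall A, derivable b e (Cond A A)
| d_RAnd : forall A B C,
    derivable b e (Imp (And (Cond A B) (Cond A C)) (Cond A (And B C)))
| d_CM : forall A B C,
    derivable b e (Imp (And (Cond A B) (Cond A C)) (Cond (And A B) C))
| d_OR : forall A B C,
    derivable b e (Imp (And (Cond A C) (Cond B C)) (Cond (Or A B) C))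
| d_N : hasN e -> derivable b e (Neg (Cond Top Bot))
| d_T : forall A, hasT e -> derivable b e (Imp A (Neg (Cond A Bot)))
| d_W : forall A B, hasW e -> derivable b e (Imp (Cond A B) (Imp A B))
| d_C : forall A B, hasC e -> derivable b e (Imp (And A B) (Cond A B))
| d_U1 : forall A, b = BU ->
    derivable b e (Imp (Cond (Neg A) Bot) (Cond (Neg (Cond (Neg A) Bot)) Bot))
| d_U2 : forall A, b = BU ->
    derivable b e (Imp (Neg (Cond A Bot)) (Cond (Cond A Bot) Bot))
| d_A1 : forall A B C, b = BA ->
    derivable b e (Imp (Cond A B) (Cond C (Cond A B)))
| d_A2 : forall A B C, b = BA ->
    derivable b e (Imp (Neg (Cond A B)) (Cond C (Neg (Cond A B)))).

Record model : Type := Model {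
  W : Type;
  W_inhabited : inhabited W;
  N : W -> (W -> Prop) -> Prop;
  N_nonempty : forall x alpha, N x alpha -> exists y, alpha y;
  val : nat -> W -> Prop
}.

Fixpoint forces (M : model) (x : W M) (F : form) {struct F} : Prop :=
  match F with
  | Var p => val M p x
  | Bot => False
  | And A B => forces M x A /\ forces M x B
  | Or A B => forces M x A \/ forces M x B
  | Imp A B => forces M x A -> forces M x B
  | Cond A B =>
      forall alpha, N M x alpha ->
        (exists y, alpha y /\ forces M y A) ->
        exists beta, N M x beta /\ (forall y, beta y -> alpha y) /\
          (exists y, beta y /\ forces M y A) /\
          (forall y, beta y -> forces M y A -> forces M y B)
  end.

Definition valid (M : model) (F : form) : Prop := forall x : W M, forces M x F.

Definition normal (M : model) : Prop := forall x, exists alpha, N M x alpha.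
Definition totally_reflexive (M : model) : Prop :=
  forall x, exists alpha, N M x alpha /\ alpha x.
Definition weakly_centered (M : model) : Prop :=
  forall x alpha, N M x alpha -> alpha x.
Definition centered (M : model) : Prop :=
  weakly_centered M /\ forall x, N M x (fun y => y = x).
Definition uniform (M : model) : Prop :=
  forall x alpha y, N M x alpha -> alpha y ->
    forall z, (exists a, N M x a /\ a z) <-> (exists b, N M y b /\ b z).
Definition absolute (M : model) : Prop :=
  forall x alpha y, N M x alpha -> alpha y -> N M x = N M y.

Definition base_cond (b : base) (M : model) : Prop :=
  match b with BP => True | BU => uniform M | BA => absolute M end.

Definition ext_cond (e : ext) (M : model) : Prop :=
  match e with
  | Enone => True
  | EN => normal M
  | ET => normal M /\ totally_reflexive M
  | EW => normal M /\ totally_reflexive M /\ weakly_centered M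
  | EC => normal M /\ totally_reflexive M /\ weakly_centered M /\ centered M
  end.

Definition in_class (b : base) (e : ext) (M : model) : Prop :=
  base_cond b M /\ ext_cond e M.

(* Main.v *)
Require Import Defs.
From Stdlib Require Import Bool Classical ClassicalDescription.

Section S.
Variable M : model.

Definition vx (x : W M) (G : form) : bool :=
  if excluded_middle_informative (forces M x G) then true else false.

Lemma vx_spec x G : vx x G = true <-> forces M x G.
Proof. unfold vx; destruct (excluded_middle_informative _); split; intros; try tauto; discriminate. Qed.

Lemma vx_false x G : vx x G = false <-> ~ forces M x G.
Proof. unfold vx; destruct (excluded_middle_informative _); split; intros; try tauto; discriminate. Qed.

Lemma vx_bv x : bool_valuation (vx x).
Proof.
  split; [|split; [|split]].
  - apply vx_false; simpl; tauto.
  - intros A B. destruct (vx x A) eqn:HA, (vx x B) eqn:HB; simpl;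
    rewrite ?vx_spec, ?vx_false in *; simpl; tauto.
  - intros A B. destruct (vx x A) eqn:HA, (vx x B) eqn:HB; simpl;
    rewrite ?vx_spec, ?vx_false in *; simpl; tauto.
  - intros A B. destruct (vx x A) eqn:HA, (vx x B) eqn:HB; simpl;
    rewrite ?vx_spec, ?vx_false in *; simpl; tauto.
Qed.

Lemma taut_valid F : tautology F -> valid M F.
Proof. intros H x. apply vx_spec. apply H. apply vx_bv. Qed.

Lemma cond_bot x C : forces M x (Cond C Bot) <->
  forall alpha y, N M x alpha -> alpha y -> ~ forces M y C.
Proof.
  simpl; split.
  - intros H alpha y Ha Hy Hc.
    destruct (H alpha Ha (ex_intro _ y (conj Hy Hc))) as [b [_ [_ [[z [Hz Hc']] Hb]]]].
    exact (Hb z Hz Hc').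
  - intros H alpha Ha [y [Hy Hc]]. exfalso; exact (H alpha y Ha Hy Hc).
Qed.

Lemma sound b e : in_class b e M -> forall F, derivable b e F -> valid M F.
Proof.
  intros [Hb He] F D. induction D; intro x.
  - apply taut_valid; auto.
  - exact (IHD1 x (IHD2 x)).
  - assert (HAB : forall y, forces M y A <-> forces M y B).
    { intro y. destruct (IHD y) as [h1 h2]. split; auto. }
    simpl. split.
    + intros H alpha Ha [y [Hy HB]].
      destruct (H alpha Ha (ex_intro _ y (conj Hy (proj2 (HAB y) HB)))) as [bb [H1 [H2 [[z [Hz Hz']] H4]]]].
      exists bb; split; [|split; [|split]]; auto.
      * exists z; split; auto; apply HAB; auto.
      * intros w Hw Hw'; apply H4; auto; apply HAB; auto.
    + intros H alpha Ha [y [Hy HB]].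
      destruct (H alpha Ha (ex_intro _ y (conj Hy (proj1 (HAB y) HB)))) as [bb [H1 [H2 [[z [Hz Hz']] H4]]]].
      exists bb; split; [|split; [|split]]; auto.
      * exists z; split; auto; apply HAB; auto.
      * intros w Hw Hw'; apply H4; auto; apply HAB; auto.
  - simpl. intros H alpha Ha Hex.
    destruct (H alpha Ha Hex) as [bb [H1 [H2 [H3 H4]]]].
    exists bb; split; [|split; [|split]]; auto. intros y Hy Hc. apply (IHD y). apply H4; auto.
  - simpl. intros alpha Ha Hex. exists alpha; repeat split; auto.
  - simpl. intros [H1 H2] alpha Ha Hex.
    destruct (H1 alpha Ha Hex) as [bb [B1 [B2 [B3 B4]]]].
    destruct (H2 bb B1 B3) as [cc [C1 [C2 [C3 C4]]]].
    exists cc; repeat split; auto.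
  - simpl. intros [H1 H2] alpha Ha [y [Hy [HyA HyB]]].
    destruct (H1 alpha Ha (ex_intro _ y (conj Hy HyA))) as [bb [B1 [B2 [B3 B4]]]].
    destruct (H2 bb B1 B3) as [cc [C1 [C2 [[z [Hz HzA]] C4]]]].
    exists cc; repeat split; auto.
    + exists z; repeat split; auto.
    + intros w Hw [HwA _]. auto.
  - simpl. intros [H1 H2] alpha Ha Hex.
    destruct (classic (exists y, alpha y /\ forces M y A)) as [HA|HA].
    + destruct (H1 alpha Ha HA) as [bb [B1 [B2 [[z [Hz HzA]] B4]]]].
      destruct (classic (exists y, bb y /\ forces M y B)) as [HB'|HB'].
      * destruct (H2 bb B1 HB') as [cc [C1 [C2 [[u [Hu HuB]] C4]]]].
        exists cc; repeat split; auto.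
        -- exists u; split; auto.
        -- intros w Hw [Hw'|Hw']; auto.
      * exists bb; repeat split; auto.
        -- exists z; split; auto.
        -- intros w Hw [Hw'|Hw']; auto. exfalso; apply HB'; eauto.
    + destruct Hex as [y [Hy [HyA|HyB]]]. { exfalso; apply HA; eauto. }
      destruct (H2 alpha Ha (ex_intro _ y (conj Hy HyB))) as [cc [C1 [C2 [[u [Hu HuB]] C4]]]].
      exists cc; repeat split; auto.
      * exists u; split; auto.
      * intros w Hw [Hw'|Hw']; auto. exfalso; apply HA; eauto.
  - assert (Hn : normal M).
    { destruct e; simpl in He; try tauto. exfalso; apply H; reflexivity. }
    simpl. intros H'. destruct (Hn x) as [alpha Ha].
    destruct (N_nonempty M x alpha Ha) as [y Hy].
    destruct (H' alpha Ha (ex_intro _ y (conj Hy (fun f => f)))) as [bb [_ [_ [[z [Hz _]] B4]]]].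
    exact (B4 z Hz (fun f => f)).
  - assert (Ht : totally_reflexive M).
    { destruct H as [H|[H|H]]; subst; simpl in He; tauto. }
    simpl. intros HA H'. destruct (Ht x) as [alpha [Ha Hx]].
    destruct (H' alpha Ha (ex_intro _ x (conj Hx HA))) as [bb [_ [_ [[z [Hz HzA]] B4]]]].
    exact (B4 z Hz HzA).
  - assert (Hn : normal M /\ weakly_centered M).
    { destruct H as [H|H]; subst; simpl in He; tauto. }
    destruct Hn as [Hn Hw].
    simpl. intros H' HA. destruct (Hn x) as [alpha Ha].
    destruct (H' alpha Ha (ex_intro _ x (conj (Hw x alpha Ha) HA))) as [bb [B1 [_ [_ B4]]]].
    exact (B4 x (Hw x bb B1) HA).
  - assert (Hc : centered M). { unfold hasC in H; subst; simpl in He; tauto. }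
    destruct Hc as [Hw Hc].
    simpl. intros [HA HB] alpha Ha _.
    exists (fun y => y = x); repeat split; auto.
    + intros y ->. apply Hw; auto.
    + exists x; auto.
    + intros y -> _; auto.
  - subst b. simpl in Hb. intro H.
    apply cond_bot. intros alpha y Ha Hy Hny. apply Hny.
    apply cond_bot. intros beta z Hbz Hz HnA.
    rewrite cond_bot in H.
    destruct (proj2 (Hb x alpha y Ha Hy z) (ex_intro _ beta (conj Hbz Hz))) as [g [Hg Hgz]].
    exact (H g z Hg Hgz HnA).
  - subst b. simpl in Hb. intro H.
    apply cond_bot. intros alpha y Ha Hy Hny.
    apply H. apply cond_bot. intros g z Hg Hgz HA.
    rewrite cond_bot in Hny.
    destruct (proj1 (Hb x alpha y Ha Hy z) (ex_intro _ g (conj Hg Hgz))) as [bt [Hbt Hbz]].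
    exact (Hny bt z Hbt Hbz HA).
  - subst b. simpl in Hb. intro H.
    simpl. intros alpha Ha Hex. exists alpha; repeat split; auto.
    intros y Hy _. rewrite <- (Hb x alpha y Ha Hy). exact H.
  - subst b. simpl in Hb. intro H.
    simpl. intros alpha Ha Hex. exists alpha; repeat split; auto.
    intros y Hy _. rewrite <- (Hb x alpha y Ha Hy). exact H.
Qed.

End S.

Theorem mainTheorem1 :
  forall (b : base) (e : ext) (F : form),
    derivable b e F ->
    forall M : model, in_class b e M -> valid M F.
Proof.
  intros b e F D M HM. exact (sound M b e HM F D).
Qed.
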